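(* Let $S$ be a semigroup, let $a\in S$, and define $P=\{x\in Sa : x\,\mathscr L\, ax\}$. Then the set of regular elements of the semigroup $Sa$ is $$\operatorname{Reg}(Sa)=\operatorname{Reg}(S)\cap P.$$
   Context: $Sa=\{xa:x\in S\}$ is the principal left ideal generated by $a$, regarded as a semigroup in its own right. For a semigroup $T$, $\operatorname{Reg}(T)=\{x\in T: x=xyx \text{ for some } y\in T\}$. $\mathscr L$ denotes Green's $\mathscr L$-relation on $S$: $x\,\mathscr L\, y$ iff $S^1x=S^1y$, where $S^1$ is $S$ with an identity adjoined if $S$ is not a monoid. *)

(* Defs.v *)
Definition in_Sa {S : Type} (mul : S -> S -> S) (a x : S) : Prop :=
  exists s : S, x = mul s a.

(* Membership in S^1 x (with S^1 = S with an identity adjoined):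
   z \in S^1 x  iff  z = x  or  z = s x for some s in S. *)
Definition in_S1x {S : Type} (mul : S -> S -> S) (x z : S) : Prop :=
  z = x \/ exists s : S, z = mul s x.

Definition greenL {S : Type} (mul : S -> S -> S) (x y : S) : Prop :=
  forall z : S, in_S1x mul x z <-> in_S1x mul y z.

Definition regular {S : Type} (mul : S -> S -> S) (x : S) : Prop :=
  exists y : S, x = mul (mul x y) x.

Definition regular_in_Sa {S : Type} (mul : S -> S -> S) (a x : S) : Prop :=
  in_Sa mul a x /\ exists y : S, in_Sa mul a y /\ x = mul (mul x y) x.

Definition inP {S : Type} (mul : S -> S -> S) (a x : S) : Prop :=
  in_Sa mul a x /\ greenL mul x (mul a x).

(* Main.v *)
Require Import Defs.

Theorem theorem3p2 (S : Type) (mul : S -> S -> S)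
  (mulA : forall x y z : S, mul x (mul y z) = mul (mul x y) z)
  (a : S) :
  forall x : S, regular_in_Sa mul a x <-> (regular mul x /\ inP mul a x).
Proof.
  intros x; split.
  - intros [Hx [y [[s Hy] Hr]]].
    split; [exists y; exact Hr|].
    split; [exact Hx|].
    assert (E1 : x = mul (mul x s) (mul a x)).
    { transitivity (mul (mul x y) x); [exact Hr|]. rewrite Hy. rewrite !mulA. reflexivity. }
    assert (E2 : mul a x = mul (mul a (mul x y)) x).
    { transitivity (mul a (mul (mul x y) x)); [rewrite <- Hr; reflexivity|]. rewrite !mulA. reflexivity. }
    intros z; split.
    + intros [Hz | [u Hz]]; right.
      * exists (mul x s). rewrite Hz. exact E1.
      * exists (mul u (mul x s)). rewrite Hz. transitivity (mul u (mul (mul x s) (mul a x))); [rewrite <- E1; reflexivity|]. rewrite !mulA. reflexivity.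
    + intros [Hz | [u Hz]]; right.
      * exists (mul a (mul x y)). rewrite Hz. exact E2.
      * exists (mul u (mul a (mul x y))). rewrite Hz, E2. rewrite !mulA. reflexivity.
  - intros [[y Hr] [Hx HL]].
    split; [exact Hx|].
    destruct (proj1 (HL x) (or_introl eq_refl)) as [E | [u E]].
    + exists (mul y a). split; [exists y; reflexivity|].
      assert (mul (mul x (mul y a)) x = mul (mul x y) (mul a x)) as -> by (rewrite !mulA; reflexivity).
      rewrite <- E. exact Hr.
    + exists (mul y (mul u a)). split; [exists (mul y u); rewrite !mulA; reflexivity|].
      assert (mul (mul x (mul y (mul u a))) x = mul (mul x y) (mul u (mul a x))) as ->
        by (rewrite !mulA; reflexivity).
      rewrite <- E. exact Hr.
Qed.
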